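(* If $S$ is a finite GCD closed set of positive integers and every element of $S$ generates a double-chain set in $S$, then the LCM matrix $[S]$ is invertible.
   Context: All order notions are with respect to divisibility, with meet $\gcd$; $S$ is GCD closed if $\gcd(x,y)\in S$ for all $x,y\in S$. The LCM matrix $[S]$ of $S=\{x_1,\dots,x_n\}$ has $(i,j)$ entry $\mathrm{lcm}(x_i,x_j)$. $C_S(x)$ is the set of elements of $S$ covered by $x$ in $(S,\mid)$; $\mathrm{meetcl}(C)$ is the set of gcds of all nonempty finite subsets of $C$. An element $x\in S$ generates a double-chain set in $S$ if $\mathrm{meetcl}(C_S(x))\setminus C_S(x)$ is a union of two disjoint (possibly empty) chains under divisibility. *)

(* Defs.v *)
From HB Require Import structures.
From mathcomp Require Import all_boot all_order all_algebra.
Set Implicit Arguments. Unset Strict Implicit. Unset Printing Implicit Defensive.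

(* A finite set S of positive integers is represented by a duplicate-free
   sequence S : seq nat (its order fixes the enumeration x_1, ..., x_n). *)

Definition gcd_closed (S : seq nat) : Prop :=
  forall x y, x \in S -> y \in S -> gcdn x y \in S.

Definition covers (S : seq nat) (x y : nat) : Prop :=
  [/\ x \in S, y \in S, y %| x, y != x &
      forall z, z \in S -> y %| z -> z %| x -> z = y \/ z = x].

Definition CS (S : seq nat) (x : nat) : nat -> Prop := fun y => covers S x y.

Definition meetcl (C : nat -> Prop) : nat -> Prop := fun d =>
  exists t : seq nat, [/\ t != [::], (forall c, c \in t -> C c) &
                          d = foldr gcdn 0 t].

Definition dvd_chain (A : nat -> Prop) : Prop :=
  forall a b, A a -> A b -> (a %| b) || (b %| a).

Definition double_chain_gen (S : seq nat) (x : nat) : Prop :=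
  exists A B : nat -> Prop,
    [/\ dvd_chain A, dvd_chain B, (forall d, A d -> B d -> False) &
        forall d, (meetcl (CS S x) d /\ ~ CS S x d) <-> (A d \/ B d)].

Definition lcm_matrix (S : seq nat) : 'M[rat]_(size S) :=
  \matrix_(i < size S, j < size S) ((lcmn (nth 0 S i) (nth 0 S j))%:R)%R.

(* Main.v *)
Require Import Defs.
From HB Require Import structures.
From mathcomp Require Import all_boot all_order all_algebra.
From mathcomp Require Import zify ring lra.
Set Implicit Arguments. Unset Strict Implicit. Unset Printing Implicit Defensive.
Import Order.TTheory GRing.Theory Num.Theory.
Local Open Scope ring_scope.

Fixpoint gf (k n : nat) : rat :=
  if k is k'.+1 then (n%:R)^-1 - \sum_(d < n | (d %| n)%N) gf k' d else 0.

Lemma gf_fuel k1 k2 d : (d < k1)%N -> (d < k2)%N -> gf k1 d = gf k2 d.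
Proof.
elim: k1 k2 d => [//|k1 IH] [//|k2] d /= h1 h2.
congr (_ - _); apply: eq_bigr => e _; apply: IH.
  by apply: leq_trans (ltn_ord e) _.
by apply: leq_trans (ltn_ord e) _.
Qed.

Definition g (n : nat) : rat := gf n.+1 n.

Lemma g_sum_bound N n : (0 < n)%N -> (n <= N)%N ->
  \sum_(d < N.+1 | (d %| n)%N) g d = (n%:R)^-1.
Proof.
move=> n0 hn.
have -> : \sum_(d < N.+1 | (d %| n)%N) g d = \sum_(d < n.+1 | (d %| n)%N) g d.
  rewrite -(big_mkord (fun d => (d %| n)%N) g) -(big_mkord (fun d => (d %| n)%N) g).
  rewrite (big_cat_nat _ (n := n.+1)) //= ?ltnS //.
  rewrite [X in _ + X]big_nat_cond [X in _ + X]big1 ?addr0 //.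
  move=> i /andP [/andP [hi _] hd].
  by have := dvdn_leq n0 hd; lia.
rewrite big_mkcond big_ord_recr /= -big_mkcond /= dvdnn.
rewrite {2}/g /=.
rewrite (eq_bigr (fun d : 'I_n => gf n d)); first by rewrite addrC subrK.
by move=> i _; rewrite /g; apply: gf_fuel.
Qed.

Fixpoint I (x : nat) (C : seq nat) : rat :=
  if C is y :: C' then I x C' - I (gcdn x y) C' else (x%:R)^-1.

Lemma I_rep N x C : (0 < x)%N -> (x <= N)%N ->
  I x C = \sum_(d < N.+1 | (d %| x)%N && all (fun t => ~~ (d %| t)%N) C) g d.
Proof.
elim: C x => [|y C IH] x hx hxN /=.
  rewrite -(g_sum_bound hx hxN); apply: eq_bigl => d; by rewrite andbT.
have hg : (0 < gcdn x y)%N by rewrite gcdn_gt0 hx.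
have hgN : (gcdn x y <= N)%N by apply: leq_trans (dvdn_leq hx (dvdn_gcdl x y)) hxN.
rewrite (IH x hx hxN) (IH _ hg hgN).
rewrite (bigID (fun d : 'I_N.+1 => (d %| y)%N)) /=.
have -> : \sum_(i < N.+1 | ((i %| x)%N && all (fun t => ~~ (i %| t)%N) C) && (i %| y)%N) g i
   = \sum_(d < N.+1 | (d %| gcdn x y)%N && all (fun t => ~~ (d %| t)%N) C) g d.
  apply: eq_bigl => d; rewrite dvdn_gcd; by case: (d %| x)%N; case: (d %| y)%N; case: all.
rewrite addrC addrK; apply: eq_bigl => d.
by case: (d %| x)%N; case: (d %| y)%N; case: all.
Qed.
Definition coversb (S : seq nat) (x y : nat) : bool :=
  [&& x \in S, y \in S, (y %| x)%N, y != x &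
      all (fun z => ((y %| z)%N && (z %| x)%N) ==> ((z == y) || (z == x))) S].

Lemma coversP S x y : reflect (covers S x y) (coversb S x y).
Proof.
apply: (iffP idP).
  case/and5P => h1 h2 h3 h4 /allP h5; split => // z zS yz zx.
  by have := h5 z zS; rewrite yz zx /= => /orP [] /eqP ->; [left|right].
case => h1 h2 h3 h4 h5; apply/and5P; split => //; apply/allP => z zS.
apply/implyP => /andP [yz zx]; case: (h5 z zS yz zx) => ->; by rewrite eqxx ?orbT.
Qed.

Definition cov (S : seq nat) (x : nat) : seq nat := [seq y <- S | coversb S x y].

Definition hS (S : seq nat) (x : nat) : rat := I x (cov S x).

Section Cross.
Variable S : seq nat.
Hypothesis Spos : forall x, x \in S -> (0 < x)%N.
Hypothesis Sgcd : gcd_closed S.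

Lemma unique_min n d : n \in S -> (d %| n)%N ->
  exists2 z0, z0 \in S & forall z, z \in S ->
    [&& (z %| n)%N, (d %| z)%N & all (fun t => ~~ (d %| t)%N) (cov S z)] = (z == z0).
Proof.
move=> nS dn.
pose P := fun k => [&& k \in S, (d %| k)%N & (k %| n)%N].
have exP : exists k, P k by exists n; rewrite /P nS dn dvdnn.
case: (ex_minnP exP) => z0 /and3P [z0S dz0 z0n] minz0.
have z0min : forall z, P z -> (z0 %| z)%N.
  move=> z /and3P [zS dz zn].
  have Pg : P (gcdn z z0) by rewrite /P (Sgcd zS z0S) dvdn_gcd dz dz0 /= (dvdn_trans (dvdn_gcdl _ _) zn).
  have := minz0 _ Pg.
  have := dvdn_leq (Spos z0S) (dvdn_gcdr z z0) => h1 h2.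
  have -> : z0 = gcdn z z0 by apply/eqP; rewrite eqn_leq h1 h2.
  exact: dvdn_gcdl.
exists z0 => // z zS.
apply/idP/idP.
  case/and3P => zn dz /allP hall; apply/negPn/negP => nz.
  have z0z : (z0 %| z)%N by apply: z0min; rewrite /P zS dz zn.
  pose Q := fun k => [&& k \in S, (z0 %| k)%N, (k %| z)%N & k != z].
  have exQ : exists k, Q k by exists z0; rewrite /Q z0S dvdnn z0z eq_sym nz.
  have ubQ : forall k, Q k -> (k <= z)%N.
    by move=> k /and4P [_ _ kz _]; apply: dvdn_leq (Spos zS) kz.
  case: (ex_maxnP exQ ubQ) => t /and4P [tS z0t tz tnz] maxt.
  have tcov : t \in cov S z.
    rewrite mem_filter tS andbT; apply/coversP; split => // u uS tu uz.
    case: (eqVneq u z) => [->|unz]; first by right.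
    left; have Qu : Q u by rewrite /Q uS (dvdn_trans z0t tu) uz unz.
    have := maxt _ Qu; have := dvdn_leq (Spos uS) tu => h1 h2.
    by apply/eqP; rewrite eqn_leq h1 h2.
  by have := hall t tcov; rewrite (dvdn_trans dz0 z0t).
move/eqP ->; rewrite z0n dz0 /=; apply/allP => t.
rewrite mem_filter => /andP [/coversP [_ tS tz0 tnz _] _]; apply/negP => dt.
have Pt : P t by rewrite /P tS dt (dvdn_trans tz0 z0n).
have := z0min _ Pt => z0t.
by move: tnz; rewrite eqn_dvd tz0 z0t.
Qed.

End Cross.

Lemma crosscut (S : seq nat) (Suniq : uniq S)
  (Spos : forall x, x \in S -> (0 < x)%N) (Sgcd : gcd_closed S) n :
  n \in S ->
  \sum_(k < size S | (nth 0 S k %| n)%N) hS S (nth 0 S k) = (n%:R)^-1.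
Proof.
move=> nS; have n0 := Spos _ nS.
have sS : forall k : 'I_(size S), nth 0 S k \in S by move=> k; apply: mem_nth.
rewrite (eq_bigr (fun k : 'I_(size S) => \sum_(d < n.+1)
   if (d %| nth 0 S k)%N && all (fun t => ~~ (d %| t)%N) (cov S (nth 0 S k)) then g d else 0)); last first.
  move=> k kn; rewrite /hS (@I_rep n (nth 0 S k) (cov S (nth 0 S k)) (Spos _ (sS k))) ?big_mkcond //.
  exact: dvdn_leq n0 kn.
rewrite exchange_big /= -(g_sum_bound n0 (leqnn n)) [RHS]big_mkcond /=.
apply: eq_bigr => d _.
rewrite -big_mkcondr /=.
case: ifP => dn; last first.
  rewrite big_pred0 // => k; apply/negP => /andP [kn /andP [dk _]].
  by rewrite (dvdn_trans dk kn) in dn.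
case: (@unique_min S Spos Sgcd n d nS dn) => z0 z0S hz0.
have k0lt : (index z0 S < size S)%N by rewrite index_mem.
rewrite (big_pred1 (Ordinal k0lt)) // => k /=.
rewrite hz0 //; apply/eqP/eqP => [e|->]; last by rewrite /= nth_index.
by apply: val_inj; rewrite /= -e index_uniq.
Qed.

Lemma I_perm x C C' : (0 < x)%N -> perm_eq C C' -> I x C = I x C'.
Proof.
move=> x0 pC; rewrite (@I_rep x x C x0 (leqnn x)) (@I_rep x x C' x0 (leqnn x)).
apply: eq_bigl => d; congr (_ && _); apply: eq_all_r; exact: perm_mem.
Qed.

Lemma I_chain y C : (0 < y)%N -> C != [::] ->
  (forall t, t \in C -> ~~ (y %| t)%N) ->
  (forall t1 t2, t1 \in C -> t2 \in C ->
     (gcdn y t1 %| gcdn y t2)%N || (gcdn y t2 %| gcdn y t1)%N) ->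
  I y C < 0.
Proof.
move=> y0 Cn0 ndiv hch.
pose P := fun k => has (fun t => gcdn y t == k) C.
have exP : exists k, P k.
  have [t tC] : exists t, t \in C by case: (C) Cn0 => [//|t C'] _; exists t; rewrite inE eqxx.
  by exists (gcdn y t); apply/hasP; exists t.
have ubP : forall k, P k -> (k <= y)%N.
  by move=> k /hasP [t _ /eqP <-]; apply: dvdn_leq y0 (dvdn_gcdl _ _).
case: (ex_maxnP exP ubP) => m /hasP [t0 t0C /eqP em] maxm.
have hm : forall t, t \in C -> (gcdn y t %| m)%N.
  move=> t tC; case/orP: (hch t t0 tC t0C); rewrite em //.
  move=> mt; have Pt : P (gcdn y t) by apply/hasP; exists t.
  have h1 := maxm _ Pt.
  have g0 : (0 < gcdn y t)%N by rewrite gcdn_gt0 y0.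
  have h2 := dvdn_leq g0 mt.
  by have -> : gcdn y t = m by apply/eqP; rewrite eqn_leq h1 h2.
have m0 : (0 < m)%N by rewrite -em gcdn_gt0 y0.
have my : (m %| y)%N by rewrite -em dvdn_gcdl.
have mlt : (m < y)%N.
  rewrite ltn_neqAle (dvdn_leq y0 my) andbT; apply/eqP => e.
  by have := ndiv t0 t0C; rewrite -{1}e -em dvdn_gcdr.
rewrite (@I_rep y y C y0 (leqnn y)).
have -> : \sum_(d < y.+1 | (d %| y)%N && all (fun t => ~~ (d %| t)%N) C) g d
        = \sum_(d < y.+1 | (d %| y)%N) g d - \sum_(d < y.+1 | (d %| m)%N) g d.
  rewrite [in X in X - _](bigID (fun d : 'I_y.+1 => (d %| m)%N)) /=.
  have -> : \sum_(i < y.+1 | (i %| y)%N && (i %| m)%N) g i = \sum_(d < y.+1 | (d %| m)%N) g d.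
    by apply: eq_bigl => d; case dm: (d %| m)%N; rewrite ?andbT ?andbF // (dvdn_trans dm my).
  rewrite [RHS]addrC addKr; apply: eq_bigl => d; case dy: (d %| y)%N => //=.
  apply/allP/idP => [h|ndm t tC].
    apply/negP => dm; by have := h t0 t0C; rewrite (dvdn_trans dm _) // -em dvdn_gcdr.
  apply/negP => dt; move: ndm; rewrite (dvdn_trans _ (hm t tC)) //.
  by rewrite dvdn_gcd dy dt.
rewrite (g_sum_bound y0 (leqnn y)) (g_sum_bound m0 (ltnW mlt)) subr_lt0.
by rewrite ltf_pV2 ?ltr_nat // posrE ltr0n.
Qed.

Definition DC (C : seq nat) : Prop := exists A B : nat -> Prop,
  [/\ dvd_chain A, dvd_chain B, (forall d, A d -> B d -> False) &
      forall y z, y \in C -> z \in C -> y != z -> A (gcdn y z) \/ B (gcdn y z)].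

Definition goodb (C : seq nat) (y : nat) : bool :=
  all (fun t1 => all (fun t2 => [|| t1 == y, t2 == y,
        (gcdn y t1 %| gcdn y t2)%N | (gcdn y t2 %| gcdn y t1)%N]) C) C.

Lemma exists_good C : uniq C -> (forall y, y \in C -> (0 < y)%N) -> DC C ->
  (1 < size C)%N -> exists2 y, y \in C & goodb C y.
Proof.
move=> Cu Cpos [A [B [chA chB dAB hAB]]] sC.
pose P := fun k => has (fun y => has (fun z => (y != z) && (gcdn y z == k)) C) C.
have [a [b [aC bC ab]]] : exists a b, [/\ a \in C, b \in C & a != b].
  case: (C) Cu sC => [//|a [//|b r]] /= /andP [ha _] _.
  exists a, b; rewrite !inE !eqxx orbT; split => //.
  by apply/eqP => e; rewrite e inE eqxx in ha.
have exP : exists k, P k.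
  exists (gcdn a b); apply/hasP; exists a => //; apply/hasP; exists b => //.
  by rewrite ab eqxx.
clear a b aC bC ab; case: (ex_minnP exP) => w /hasP [y yC /hasP [z zC /andP [yz /eqP ew]]] minw.
have w0 : (0 < w)%N by rewrite -ew gcdn_gt0 (Cpos y yC).
have forced : forall s, P s -> (s %| y)%N -> (s %| z)%N -> s = w.
  move=> s Ps sy sz; have sw : (s %| w)%N by rewrite -ew dvdn_gcd sy sz.
  by apply/eqP; rewrite eqn_leq (dvdn_leq w0 sw) (minw _ Ps).
have Pg : forall a t, a \in C -> t \in C -> a != t -> P (gcdn a t).
  by move=> a t aC tC at_; apply/hasP; exists a => //; apply/hasP; exists t; rewrite // at_ eqxx.
have fail : forall a, a \in C -> ~~ goodb C a ->
   exists t1 t2, [/\ t1 \in C, t2 \in C, t1 != a & t2 != a] /\ (A (gcdn a t1) /\ B (gcdn a t2)).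
  move=> a aC /allPn [t1 t1C /allPn [t2 t2C]].
  rewrite !negb_or => /and4P [n1 n2 n12 n21].
  have a1 : a != t1 by rewrite eq_sym.
  have a2 : a != t2 by rewrite eq_sym.
  case: (hAB a t1 aC t1C a1) => h1; case: (hAB a t2 aC t2C a2) => h2.
  - by have := chA _ _ h1 h2; rewrite (negbTE n12) (negbTE n21).
  - by exists t1, t2.
  - by exists t2, t1.
  - by have := chB _ _ h1 h2; rewrite (negbTE n12) (negbTE n21).
case gy: (goodb C y); first by exists y.
case gz: (goodb C z); first by exists z.
case: (fail y yC (negbT gy)) => [t1 [t2 [[t1C t2C t1y t2y] [Ay By]]]].
case: (fail z zC (negbT gz)) => [s1 [s2 [[s1C s2C s1z s2z] [Az Bz]]]].
have PA : A w.
  case/orP: (chA _ _ Ay Az) => h.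
    rewrite -(forced _ (Pg _ _ yC t1C _)) //; first by rewrite eq_sym.
      by rewrite dvdn_gcdl.
    by apply: dvdn_trans h (dvdn_gcdl _ _).
  rewrite -(forced _ (Pg _ _ zC s1C _)) //; first by rewrite eq_sym.
    by apply: dvdn_trans h (dvdn_gcdl _ _).
  by rewrite dvdn_gcdl.
have PB : B w.
  case/orP: (chB _ _ By Bz) => h.
    rewrite -(forced _ (Pg _ _ yC t2C _)) //; first by rewrite eq_sym.
      by rewrite dvdn_gcdl.
    by apply: dvdn_trans h (dvdn_gcdl _ _).
  rewrite -(forced _ (Pg _ _ zC s2C _)) //; first by rewrite eq_sym.
    by apply: dvdn_trans h (dvdn_gcdl _ _).
  by rewrite dvdn_gcdl.
by case: (dAB _ PA PB).
Qed.

Definition Hyp (x : nat) (C : seq nat) : Prop :=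
  [/\ (0 < x)%N, uniq C, (forall y, y \in C -> (y %| x)%N && (y != x)),
      (forall y z, y \in C -> z \in C -> (y %| z)%N -> y = z) & DC C].

Lemma inv_lt (a b : nat) : (0 < a)%N -> (a < b)%N -> (b%:R : rat)^-1 < (a%:R)^-1.
Proof.
move=> a0 ab; have b0 : (0 < b)%N by lia.
by rewrite ltf_pV2 ?ltr_nat // posrE ltr0n.
Qed.

Lemma dbl_le (g y : nat) : (0 < g)%N -> (g %| y)%N -> g != y -> (0 < y)%N -> (2 * g <= y)%N.
Proof.
move=> g0 /dvdnP [k ->] gy y0.
have k1 : k != 1%N by apply: contraNneq gy => ->; rewrite mul1n.
have k0 : k != 0%N by apply: contraTneq y0 => ->.
nia.
Qed.

Lemma sign n : forall x C, size C = n -> Hyp x C ->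
  (n == 1%N -> I x C < 0) /\ (n != 1%N -> 0 < I x C).
Proof.
elim/ltn_ind: n => n IH x C sC [x0 Cu Cdiv Canti Cdc].
have Cpos : forall y, y \in C -> (0 < y)%N.
  by move=> y yC; case/andP: (Cdiv y yC) => yx _; apply: dvdn_gt0 x0 yx.
have Cgcd : forall y, y \in C -> gcdn x y = y.
  by move=> y yC; case/andP: (Cdiv y yC) => yx _; apply/gcdn_idPr.
have Clt : forall y, y \in C -> (y < x)%N.
  move=> y yC; case/andP: (Cdiv y yC) => yx ynx.
  by rewrite ltn_neqAle ynx (dvdn_leq x0 yx).
case: C sC Cu Cdiv Canti Cdc Cpos Cgcd Clt => [|y [|z [|w r]]] sC Cu Cdiv Canti Cdc Cpos Cgcd Clt.
- by rewrite -sC; split => // _; rewrite /= invr_gt0 ltr0n.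
- rewrite -sC; split => // _ /=.
  rewrite (Cgcd y (mem_head _ _)) subr_lt0; apply: inv_lt.
    exact: Cpos (mem_head _ _).
  exact: Clt (mem_head _ _).
- rewrite -sC; split => // _ /=.
  have yC : y \in [:: y; z] by rewrite mem_head.
  have zC : z \in [:: y; z] by rewrite !inE eqxx orbT.
  rewrite (Cgcd y yC) (gcdn_idPr _) ?(andP (Cdiv z zC)).1 //.
  have y0 := Cpos y yC; have z0 := Cpos z zC.
  have g0 : (0 < gcdn y z)%N by rewrite gcdn_gt0 y0.
  have yz : y != z by move: Cu => /= /andP []; rewrite inE.
  have gy : gcdn y z != y.
    apply/negP => /eqP e; have : (y %| z)%N by rewrite -e dvdn_gcdr.
    by move/(Canti _ _ yC zC) => e2; rewrite e2 eqxx in yz.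
  have gz : gcdn y z != z.
    apply/negP => /eqP e; have : (z %| y)%N by rewrite -e dvdn_gcdl.
    by move/(Canti _ _ zC yC) => e2; rewrite e2 eqxx in yz.
  have h1 := dbl_le g0 (dvdn_gcdl y z) gy y0.
  have h2 := dbl_le g0 (dvdn_gcdr y z) gz z0.
  have hx : 0 < (x%:R : rat)^-1 by rewrite invr_gt0 ltr0n.
  have hy : (y%:R : rat)^-1 <= (gcdn y z)%:R^-1 / 2.
    rewrite -invfM -natrM mulnC lef_pV2 ?ler_nat // posrE ltr0n //.
    by rewrite muln_gt0 g0.
  have hz : (z%:R : rat)^-1 <= (gcdn y z)%:R^-1 / 2.
    rewrite -invfM -natrM mulnC lef_pV2 ?ler_nat // posrE ltr0n //.
    by rewrite muln_gt0 g0.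
  lra.
- set C := [:: y, z, w & r] in sC Cu Cdiv Canti Cdc Cpos Cgcd Clt *.
  have sC3 : (2 < size C)%N by rewrite /C.
  clearbody C.
  have n3 : (2 < n)%N by rewrite -sC.
  case: (exists_good Cu Cpos Cdc (ltnW sC3)) => y0 y0C good.
  have pC := perm_to_rem y0C.
  rewrite (I_perm x0 pC) /= (Cgcd _ y0C).
  set C' := rem y0 C.
  have sC' : size C' = n.-1 by rewrite size_rem // sC.
  have memC' : forall t, t \in C' -> (t \in C) && (t != y0).
    by move=> t; rewrite (mem_rem_uniq _ Cu) inE andbC.
  have HC' : Hyp x C'.
    split => //; first exact: rem_uniq.
    - by move=> t /memC' /andP [tC _]; apply: Cdiv.
    - by move=> t1 t2 /memC' /andP [t1C _] /memC' /andP [t2C _]; apply: Canti.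
    case: Cdc => A [B [chA chB dAB hAB]]; exists A, B; split => //.
    by move=> t1 t2 /memC' /andP [t1C _] /memC' /andP [t2C _]; apply: hAB.
  have [_ pos'] := IH n.-1 ltac:(lia) x C' sC' HC'.
  have pos := pos' ltac:(apply/eqP; lia).
  have neg : I y0 C' < 0.
    apply: I_chain.
    - exact: Cpos.
    - by apply/eqP => e; move: sC'; rewrite e /=; lia.
    - move=> t /memC' /andP [tC tny]; apply/negP => yt.
      by move: tny; rewrite (Canti _ _ y0C tC yt) eqxx.
    move=> t1 t2 /memC' /andP [t1C t1y] /memC' /andP [t2C t2y].
    move/allP: good => /(_ t1 t1C) /allP /(_ t2 t2C).
    by rewrite (negbTE t1y) (negbTE t2y).
  split; first by move/eqP => e; lia.
  move=> _; lra.
Qed.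

Lemma hS_neq0 (S : seq nat) (Suniq : uniq S)
  (Spos : forall x, x \in S -> (0 < x)%N)
  (Hdc : forall x, x \in S -> double_chain_gen S x) x :
  x \in S -> hS S x != 0.
Proof.
move=> xS.
have mc : forall y, y \in cov S x -> covers S x y.
  by move=> y; rewrite mem_filter => /andP [/coversP h _].
have H : Hyp x (cov S x).
  split.
  - exact: Spos.
  - exact: filter_uniq.
  - by move=> y /mc [_ _ yx ynx _]; rewrite yx ynx.
  - move=> y z /mc [_ yS yx ynx hy] /mc [_ zS zx znx _] yz.
    by case: (hy z zS yz zx) => // e; rewrite e eqxx in znx.
  case: (Hdc x xS) => A [B [chA chB dAB hAB]]; exists A, B; split => //.
  move=> y z yC zC yz; apply/hAB; split.
    exists [:: y; z]; split => //; first by move=> c; rewrite !inE => /orP [] /eqP ->; apply: mc.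
    by rewrite /= gcdn0.
  move=> [_ gS gx gnx hg].
  have [_ yS yx ynx hy] := mc y yC.
  have [_ zS zx znx hz] := mc z zC.
  case: (hg y yS (dvdn_gcdl _ _) yx) => e; last by rewrite e eqxx in ynx.
  have yzd : (y %| z)%N by rewrite {1}e dvdn_gcdr.
  case: (hy z zS yzd zx) => e2; first by rewrite e2 eqxx in yz.
  by rewrite e2 eqxx in znx.
have [hn hp] := sign (erefl _) H.
rewrite /hS; case: (size (cov S x) =P 1%N) => [/eqP e|/eqP e].
  by rewrite lt_eqF ?(hn e).
by rewrite gt_eqF ?(hp e).
Qed.

Lemma tri_min m (s : 'I_m -> nat) (u : 'I_m -> rat) :
  injective s -> (forall k, (0 < s k)%N) ->
  (forall j, \sum_(k | (s k %| s j)%N) u k = 0) -> forall k, u k = 0.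
Proof.
move=> sinj spos hsum k; apply/eqP/negPn/negP => uk.
pose P := fun a => [exists k, (u k != 0) && (s k == a)].
have exP : exists a, P a by exists (s k); apply/existsP; exists k; rewrite uk eqxx.
case: (ex_minnP exP) => a /existsP [k0 /andP [uk0 /eqP sk0]] mina.
have := hsum k0; rewrite (bigD1 k0) //= big1 ?addr0; first by move/eqP; rewrite (negbTE uk0).
move=> k1 /andP [dk kk]; apply/eqP/negPn/negP => uk1.
have Pk1 : P (s k1) by apply/existsP; exists k1; rewrite uk1 eqxx.
have := mina _ Pk1; rewrite -sk0 => le1.
have := dvdn_leq (spos k0) dk => le2.
have : s k1 = s k0 by apply/eqP; rewrite eqn_leq le2 le1.
by move/sinj => e; rewrite e eqxx in kk.
Qed.

Lemma tri_max m (s : 'I_m -> nat) (u : 'I_m -> rat) :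
  injective s -> (forall k, (0 < s k)%N) ->
  (forall j, \sum_(k | (s j %| s k)%N) u k = 0) -> forall k, u k = 0.
Proof.
move=> sinj spos hsum k; apply/eqP/negPn/negP => uk.
pose P := fun a => [exists k, (u k != 0) && (s k == a)].
have exP : exists a, P a by exists (s k); apply/existsP; exists k; rewrite uk eqxx.
have ubP : forall a, P a -> (a <= \max_i s i)%N.
  by move=> a /existsP [k1 /andP [_ /eqP <-]]; apply: leq_bigmax.
case: (ex_maxnP exP ubP) => a /existsP [k0 /andP [uk0 /eqP sk0]] maxa.
have := hsum k0; rewrite (bigD1 k0) //= big1 ?addr0; first by move/eqP; rewrite (negbTE uk0).
move=> k1 /andP [dk kk]; apply/eqP/negPn/negP => uk1.
have Pk1 : P (s k1) by apply/existsP; exists k1; rewrite uk1 eqxx.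
have := maxa _ Pk1; rewrite -sk0 => le1.
have := dvdn_leq (spos k1) dk => le2.
have : s k1 = s k0 by apply/eqP; rewrite eqn_leq le2 le1.
by move/sinj => e; rewrite e eqxx in kk.
Qed.

Lemma main_aux (S : seq nat) (Suniq : uniq S)
  (Spos : forall x, x \in S -> (0 < x)%N) (Sgcd : gcd_closed S)
  (Hdc : forall x, x \in S -> double_chain_gen S x) :
  lcm_matrix S \in unitmx.
Proof.
rewrite unitmxE unitfE; apply/negP => /det0P [v vn0 vM].
pose s := fun k : 'I_(size S) => nth 0%N S k.
have sS : forall k, s k \in S by move=> k; apply: mem_nth.
have spos : forall k, (0 < s k)%N by move=> k; apply: Spos.
have sinj : injective s.
  by move=> k1 k2 /eqP; rewrite /s nth_uniq // => /eqP /val_inj.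
pose hk := fun k => hS S (s k).
pose w := fun k => \sum_i (if (s k %| s i)%N then v 0 i * (s i)%:R else 0).
pose u := fun k => hk k * w k.
have eqj : forall j, \sum_i v 0 i * (lcmn (s i) (s j))%:R = 0.
  move=> j; have e : (v *m lcm_matrix S) 0 j = 0 by rewrite vM mxE.
  rewrite mxE in e; rewrite -[RHS]e; apply: eq_bigr => i _; by rewrite mxE.
have lcmE : forall a b, (0 < a)%N -> (0 < b)%N ->
    (lcmn a b)%:R = (a%:R : rat) * b%:R * (gcdn a b)%:R^-1.
  move=> a b a0 b0; have g0 : (gcdn a b)%:R != 0 :> rat by rewrite pnatr_eq0 -lt0n gcdn_gt0 a0.
  by rewrite -natrM -muln_lcm_gcd natrM mulfK.
have E1 : forall j, \sum_(k | (s k %| s j)%N) u k = 0.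
  move=> j; have := eqj j.
  have -> : \sum_i v 0 i * (lcmn (s i) (s j))%:R
      = (s j)%:R * \sum_(k | (s k %| s j)%N) u k.
    rewrite (eq_bigr (fun i => \sum_k (if (s k %| s i)%N && (s k %| s j)%N
                  then v 0 i * (s i)%:R * (s j)%:R * hk k else 0))); last first.
      move=> i _; rewrite lcmE // -(crosscut Suniq Spos Sgcd (Sgcd _ _ (sS i) (sS j))).
      rewrite big_mkcond !mulr_sumr; apply: eq_bigr => k _.
      rewrite dvdn_gcd; case: ifP => _; rewrite /hk /s; ring.
    rewrite exchange_big mulr_sumr [RHS]big_mkcond; apply: eq_bigr => k _.
    case: ifP => dk; last by rewrite big1 // => i _; rewrite andbF.
    rewrite /u /w !mulr_sumr; apply: eq_bigr => i _.
    rewrite andbT; case: ifP => _; rewrite ?mulr0 //; ring.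
  move/eqP; rewrite mulf_eq0 pnatr_eq0 => /orP [h|/eqP //].
  by have := spos j; rewrite (eqP h).
have U0 := tri_min sinj spos E1.
have W0 : forall k, w k = 0.
  move=> k; have := U0 k; rewrite /u => /eqP; rewrite mulf_eq0 => /orP [|/eqP //].
  by rewrite (negbTE (hS_neq0 Suniq Spos Hdc (sS k))).
have V0 : forall i, v 0 i * (s i)%:R = 0.
  apply: (tri_max sinj spos) => j; rewrite -[RHS](W0 j) /w big_mkcond; reflexivity.
have v0 : v = 0.
  apply/rowP => i; rewrite mxE.
  move/eqP: (V0 i); rewrite mulf_eq0 pnatr_eq0 => /orP [/eqP -> //|h].
  by have := spos i; rewrite (eqP h).
by rewrite v0 eqxx in vn0.
Qed.

Local Close Scope ring_scope.

Theorem corollary4p3 (S : seq nat) (Suniq : uniq S)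
  (Spos : forall x, x \in S -> 0 < x) (Sgcd : gcd_closed S)
  (Hdc : forall x, x \in S -> double_chain_gen S x) :
  lcm_matrix S \in unitmx.
Proof. exact: main_aux. Qed.
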